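(* Let $F$ be an algebraically closed field with $\operatorname{char}F\neq2$, let $V$ be an infinite-dimensional vector space over $F$ and $f$ a nondegenerate quadratic form on $V$. Then the Clifford algebra $Cl(V,f)$ is a locally matrix algebra and $\mathbf{n}(Cl(V,f))=2^{\infty}$.
   Context: A quadratic form on $V$ is a map $f:V\to F$ with $f(\alpha v)=\alpha^2f(v)$ for all $\alpha\in F$, $v\in V$, such that $f(u,v)=f(u+v)-f(u)-f(v)$ is a bilinear form; $f$ is nondegenerate if this bilinear form is nondegenerate. The Clifford algebra $Cl(V,f)$ is the unital associative algebra generated by $V$ and $1$ subject to $v^2=f(v)\cdot1$ for all $v\in V$. A unital algebra $A$ is locally matrix if every finite subset lies in a subalgebra $B$ with $1_A\in B$ and $B\cong M_n(F)$ for some $n$. For such $A$, $D(A)$ is the set of $n$ with a unital subalgebra isomorphic to $M_n(F)$, and the Steinitz number $\mathbf{n}(A)$ is the least common multiple of $D(A)$ in the lattice of Steinitz numbers $\prod_p p^{r_p}$, $r_p\in\mathbb{N}\cup\{0,\infty\}$; $2^\infty$ is the Steinitz number with exponent $\infty$ at $2$ and $0$ elsewhere. *)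

(* Defs.v *)
From HB Require Import structures.
From mathcomp Require Import all_boot all_order all_algebra.
Set Implicit Arguments. Unset Strict Implicit. Unset Printing Implicit Defensive.
Import Order.TTheory GRing.Theory Num.Theory.
Local Open Scope ring_scope.

Section Defs.
Variable F : fieldType.

Definition is_lin (U W : lmodType F) (g : U -> W) : Prop :=
  forall (a : F) (u v : U), g (a *: u + v) = a *: g u + g v.

Definition lin_indep (V : lmodType F) (s : seq V) : Prop :=
  forall c : 'I_(size s) -> F,
    \sum_(i < size s) c i *: s`_i = 0 -> forall i, c i = 0.

Definition infinite_dim (V : lmodType F) : Prop :=
  forall n : nat, exists s : seq V, size s = n /\ lin_indep s.

Definition polar (V : lmodType F) (f : V -> F) (u v : V) : F :=
  f (u + v) - f u - f v.

Definition is_quadratic_form (V : lmodType F) (f : V -> F) : Prop :=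
  (forall (a : F) (v : V), f (a *: v) = a ^+ 2 * f v) /\
  (forall a u1 u2 v, polar f (a *: u1 + u2) v = a * polar f u1 v + polar f u2 v) /\
  (forall a u v1 v2, polar f u (a *: v1 + v2) = a * polar f u v1 + polar f u v2).

Definition nondegenerate_qf (V : lmodType F) (f : V -> F) : Prop :=
  forall u : V, (forall v : V, polar f u v = 0) -> u = 0.

Definition alg_hom (A B : algType F) (h : A -> B) : Prop :=
  is_lin h /\ (forall x y, h (x * y) = h x * h y) /\ h 1 = 1.

(** (A, iota) is the Clifford algebra Cl(V,f): the unital associative algebra
    generated by V and 1 subject to v^2 = f(v) 1, given by its universal
    property (presentation by generators and relations). *)
Definition clifford_relations (V : lmodType F) (f : V -> F) (B : algType F)
  (g : V -> B) : Prop :=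
  is_lin g /\ forall v, g v * g v = (f v)%:A.

Definition is_clifford_algebra (V : lmodType F) (f : V -> F) (A : algType F)
  (iota : V -> A) : Prop :=
  clifford_relations f iota /\
  forall (B : algType F) (g : V -> B), clifford_relations f g ->
    exists h : A -> B, [/\ alg_hom h, (forall v, h (iota v) = g v) &
      forall h' : A -> B, alg_hom h' -> (forall v, h' (iota v) = g v) ->
        forall x, h' x = h x].

(** Unital embeddings of M_n(F) into A: their images are exactly the unital
    subalgebras of A isomorphic to M_n(F). *)
Definition matrix_embedding (A : algType F) (n : nat) (phi : 'M[F]_n -> A) : Prop :=
  [/\ injective phi, is_lin phi,
      (forall M N : 'M[F]_n, phi (M *m N) = phi M * phi N) & phi 1%:M = 1].

Definition locally_matrix (A : algType F) : Prop :=
  forall s : seq A, exists n : nat, exists phi : 'M[F]_n -> A,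
    matrix_embedding phi /\ forall x, x \in s -> exists M, phi M = x.

Definition Dset (A : algType F) (n : nat) : Prop :=
  exists phi : 'M[F]_n -> A, matrix_embedding phi.

End Defs.

(** Steinitz numbers: prod_p p^(r p), r p in N u {oo}; [None] encodes oo.
    Only the values at primes p matter. *)
Definition steinitz := nat -> option nat.

Definition ext_le (a b : option nat) : Prop :=
  match a, b with
  | _, None => True
  | None, Some _ => False
  | Some x, Some y => (x <= y)%N
  end.

Definition steinitz_dvd (s t : steinitz) : Prop :=
  forall p, prime p -> ext_le (s p) (t p).

Definition steinitz_of_nat (n : nat) : steinitz := fun p => Some (logn p n).

Definition is_steinitz_lcm (D : nat -> Prop) (s : steinitz) : Prop :=
  (forall d, D d -> steinitz_dvd (steinitz_of_nat d) s) /\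
  (forall t, (forall d, D d -> steinitz_dvd (steinitz_of_nat d) t) ->
     steinitz_dvd s t).

Definition two_inf : steinitz := fun p => if p == 2%N then None else Some 0%N.

(* Main.v *)
Require Import Defs.
From HB Require Import structures.
From mathcomp Require Import all_boot all_order all_algebra.
From mathcomp Require Import ring.
From Stdlib Require Import Classical ClassicalEpsilon.
Import GRing.Theory.
Set Implicit Arguments. Unset Strict Implicit. Unset Printing Implicit Defensive.
Local Open Scope ring_scope.

Section Alg.
Variables (F : fieldType) (A : algType F).

Definition MUsys (I : finType) (e : I -> I -> A) :=
  (forall i j k l, e i j * e k l = if j == k then e i l else 0) /\
  \sum_i e i i = 1.

Definition anti (a b : A) := a * b = - (b * a).
Definition comm (a b : A) := a * b = b * a.

Fixpoint clp (R : seq (A * A)) : Prop :=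
  match R with
  | [::] => True
  | (x, y) :: R' => [/\ x * x = 0, y * y = 0, x * y + y * x = 1,
      (forall p, p \in R' -> [/\ anti x p.1, anti x p.2, anti y p.1 & anti y p.2])
      & clp R']
  end.

Definition subsp (P : A -> Prop) := P 0 /\ forall a x y, P x -> P y -> P (a *: x + y).
Definition spanE (I : finType) (e : I -> I -> A) x :=
  forall P, subsp P -> (forall i j, P (e i j)) -> P x.

Lemma subspD P x y : subsp P -> P x -> P y -> P (x + y).
Proof. by move=> [_ H] hx hy; have := H 1 x y hx hy; rewrite scale1r. Qed.
Lemma subspZ P a x : subsp P -> P x -> P (a *: x).
Proof. by move=> [H0 H] hx; have := H a x 0 hx H0; rewrite addr0. Qed.
Lemma subspB P x y : subsp P -> P x -> P y -> P (x - y).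
Proof. by move=> hP hx hy; rewrite -scaleN1r addrC; case: hP => _ H; apply: H. Qed.
Lemma subsp_sum P (I : Type) (r : seq I) (G : I -> A) :
  subsp P -> (forall i, P (G i)) -> P (\sum_(i <- r) G i).
Proof.
move=> hP hG; elim: r => [|i r IH]; first by rewrite big_nil; case: hP.
by rewrite big_cons; apply: subspD.
Qed.

Lemma spanE_subsp (I : finType) (e : I -> I -> A) : subsp (spanE e).
Proof.
split; first by move=> P [] .
move=> a x y hx hy P hP he; case: (hP) => _ H; apply: H; [exact: hx | exact: hy].
Qed.

Lemma spanE_e (I : finType) (e : I -> I -> A) i j : spanE e (e i j).
Proof. by move=> P _ H. Qed.

Lemma commM c u v : comm c u -> comm c v -> comm c (u * v).
Proof. by rewrite /comm => hu hv; rewrite mulrA hu -mulrA hv mulrA. Qed.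
Lemma commB c u v : comm c u -> comm c v -> comm c (u - v).
Proof. by rewrite /comm => hu hv; rewrite mulrBr mulrBl hu hv. Qed.
Lemma commC c u : comm c u -> comm u c.
Proof. by rewrite /comm. Qed.
Lemma anti_comm x y a : anti x a -> anti y a -> comm a (x * y).
Proof.
rewrite /anti /comm => hx hy.
have hx' : a * x = - (x * a) by rewrite hx opprK.
have hy' : a * y = - (y * a) by rewrite hy opprK.
by rewrite mulrA hx' mulNr -(mulrA x a y) hy' mulrN opprK mulrA.
Qed.

Lemma zz_mul z u v : comm z u -> comm z v -> (z * u) * (z * v) = (z * z) * (u * v).
Proof. by rewrite /comm => hu hv; rewrite -mulrA (mulrA u) -hu !mulrA. Qed.

Lemma clp_map z R : z * z = 1 -> (forall p, p \in R -> comm z p.1 /\ comm z p.2) ->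
  clp R -> clp (map (fun p => (z * p.1, z * p.2)) R).
Proof.
move=> zz; elim: R => [|[a b] R IH] //= hR [haa hbb hab hcross hcl].
have [za zb] := hR (a, b) (mem_head _ _).
have hR' : forall p, p \in R -> comm z p.1 /\ comm z p.2.
  by move=> p hp; apply: hR; rewrite in_cons hp orbT.
split.
- by rewrite zz_mul // zz mul1r.
- by rewrite zz_mul // zz mul1r.
- by rewrite !zz_mul // zz !mul1r.
- move=> p /mapP [q hq ->] /=; have [zq1 zq2] := hR' q hq.
  have [h1 h2 h3 h4] := hcross q hq.
  by split; rewrite /anti !zz_mul // zz !mul1r.
- exact: IH.
Qed.


Section Step.
Variables (x y : A).
Hypotheses (hxx : x * x = 0) (hyy : y * y = 0) (hxy : x * y + y * x = 1).

Lemma hyx : y * x = 1 - x * y.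
Proof. by rewrite -hxy addrC addKr. Qed.
Lemma hxyx : x * y * x = x.
Proof. by rewrite -mulrA hyx mulrBr mulr1 mulrA hxx mul0r subr0. Qed.
Lemma hyxy : y * x * y = y.
Proof. by rewrite hyx mulrBl mul1r -mulrA hyy mulr0 subr0. Qed.
Lemma hxyy : x * y * y = 0.
Proof. by rewrite -mulrA hyy mulr0. Qed.
Lemma hyxx : y * x * x = 0.
Proof. by rewrite -mulrA hxx mulr0. Qed.

Definition Eu (a b : bool) : A :=
  if a then (if b then x * y else x) else (if b then y else y * x).

Lemma Eu_mul a b c d : Eu a b * Eu c d = if b == c then Eu a d else 0.
Proof.
by case: a; case: b; case: c; case: d => /=;
  rewrite ?mulrA ?hxyx ?hyxy ?hxyy ?hyxx ?hxx ?hyy ?mul0r ?mulr0 ?hxyx ?hyxy.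
Qed.

Definition zz := x * y - y * x.
Lemma zz_sq : zz * zz = 1.
Proof.
rewrite /zz mulrBr !mulrBl !mulrA hxyx hyxy hxyy hyxx !mul0r !subr0.
by rewrite sub0r opprK hxy.
Qed.

Lemma x_zz : anti x zz.
Proof.
rewrite /anti /zz mulrBr mulrBl !mulrA hxx mul0r hxyx hyxx subr0 sub0r //.
Qed.
Lemma y_zz : anti y zz.
Proof.
rewrite /anti /zz mulrBr mulrBl !mulrA hyxy hyy mul0r hxyy sub0r subr0 opprK //.
Qed.
Lemma zz_comm a : anti x a -> anti y a -> comm zz a.
Proof.
move=> h1 h2; apply: commC; rewrite /zz; apply: commB; exact: anti_comm.
Qed.
End Step.

Lemma anti_commM u z q : anti u z -> anti u q -> comm u (z * q).
Proof.
rewrite /anti /comm => h1 h2.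
by rewrite mulrA h1 mulNr -(mulrA z u q) h2 mulrN opprK mulrA.
Qed.

Lemma spanE_lift (I J : finType) (e : I -> I -> A) (e' : J -> J -> A) (E : A) g h w :
  (forall i j, E * e i j = e' (g i j) (h i j)) -> spanE e w -> spanE e' (E * w).
Proof.
move=> hE hw P hP he'.
apply: (hw (fun w => P (E * w))).
- split; first by rewrite mulr0; case: hP.
  move=> a u v hu hv; rewrite mulrDr -scalerAr; case: hP => _ H; exact: H.
- by move=> i j; rewrite hE.
Qed.

Lemma clp_MU_n n : forall R, size R = n -> clp R -> exists I : finType, exists e : I -> I -> A,
  [/\ MUsys e, #|I| = (2 ^ size R)%N,
   (forall c, (forall p, p \in R -> comm c p.1 /\ comm c p.2) -> forall i j, comm c (e i j)) &
   (forall p, p \in R -> spanE e p.1 /\ spanE e p.2)].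
Proof.
elim: n => [|n IHn] [|[x y] R] //=.
  move=> _ _; exists 'I_1; exists (fun _ _ => 1); split.
  - split; last by rewrite big_ord1.
    by move=> i j k l; rewrite mul1r (ord1 j) (ord1 k) eqxx.
  - by rewrite card_ord.
  - by move=> c _ i j; rewrite /comm mulr1 mul1r.
  - by [].
move=> [sz].
move=> [hxx hyy hxy hcross hcl].
pose z := zz x y.
have zR : forall p, p \in R -> comm z p.1 /\ comm z p.2.
  by move=> p hp; have [h1 h2 h3 h4] := hcross p hp; split; apply: zz_comm.
have hcl' := clp_map (zz_sq hxx hyy hxy) zR hcl.
have [I [e [[eM e1] card hcomm hspan]]] := IHn _ (etrans (size_map _ _) sz) hcl'.
rewrite size_map in card.
have xc : forall i j, comm x (e i j).
  apply: hcomm => p /mapP [q hq ->] /=; have [h1 h2 h3 h4] := hcross q hq.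
  by split; apply: anti_commM => //; apply: x_zz.
have yc : forall i j, comm y (e i j).
  apply: hcomm => p /mapP [q hq ->] /=; have [h1 h2 h3 h4] := hcross q hq.
  by split; apply: anti_commM => //; apply: y_zz.
have ex : forall i j, comm (e i j) x by move=> i j; apply: commC; apply: xc.
have ey : forall i j, comm (e i j) y by move=> i j; apply: commC; apply: yc.
have Ec : forall a b i j, comm (e i j) (Eu x y a b).
  by move=> a b i j; case: a; case: b => /=; try apply: commM; first [apply: ex | apply: ey].
pose e2 := fun p q : bool * I => Eu x y p.1 q.1 * e p.2 q.2.
exists (bool * I)%type; exists e2; split.
- split.
  + move=> [a i] [b j] [c k] [d l] /=.
    rewrite -mulrA (mulrA (e i j)) Ec -mulrA mulrA Eu_mul // eM xpair_eqE.
    by case: (b == c); case: (j == k); rewrite /= ?mul0r ?mulr0.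
  + rewrite -(pair_big xpredT xpredT (fun a i => Eu x y a a * e i i)) /=.
    under eq_bigr => a _ do rewrite -mulr_sumr e1 mulr1.
    by rewrite big_bool /=.
- by rewrite card_prod card_bool card expnS.
- move=> c hc [a i] [b j] /=.
  have [cx cy] := hc (x, y) (mem_head _ _).
  have hc' : forall p, p \in R -> comm c p.1 /\ comm c p.2.
    by move=> p hp; apply: hc; rewrite in_cons hp orbT.
  have cz : comm c z by apply: commB; apply: commM.
  apply: commM.
    by case: a; case: b => //=; apply: commM.
  apply: hcomm => p /mapP [q hq ->] /=; have [h1 h2] := hc' q hq.
  by split; apply: commM.
- have lift : forall w a b, spanE e w -> spanE e2 (Eu x y a b * w).
    move=> w a b; apply: (spanE_lift (g := fun i j => (a, i)) (h := fun i j => (b, j))).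
    by [].
  have base : forall a b, spanE e2 (Eu x y a b).
    move=> a b; rewrite -[Eu x y a b]mulr1 -e1 mulr_sumr.
    apply: (@subsp_sum (spanE e2)); first exact: spanE_subsp.
    move=> i; exact: (@spanE_e _ e2 (a, i) (b, i)).
  move=> p; rewrite in_cons => /orP [/eqP -> | hp] /=.
    by split; [apply: (base true false) | apply: (base false true)].
  have [s1 s2] := hspan (z * p.1, z * p.2) (map_f _ hp).
  have zE : z = Eu x y true true - Eu x y false false by [].
  have zz1 : z * z = 1 := zz_sq hxx hyy hxy.
  split.
    rewrite -[p.1]mul1r -zz1 -mulrA {1}zE mulrBl.
    by apply: (@subspB (spanE e2)); [apply: spanE_subsp | apply: lift | apply: lift].
  rewrite -[p.2]mul1r -zz1 -mulrA {1}zE mulrBl.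
  by apply: (@subspB (spanE e2)); [apply: spanE_subsp | apply: lift | apply: lift].
Qed.

Definition phiE n (e : 'I_n -> 'I_n -> A) (M : 'M[F]_n) : A :=
  \sum_i \sum_j M i j *: e i j.

Lemma phiE_lin n (e : 'I_n -> 'I_n -> A) : is_lin (phiE e).
Proof.
move=> a M N; rewrite /phiE scaler_sumr -big_split; apply: eq_bigr => i _.
rewrite scaler_sumr -big_split; apply: eq_bigr => j _.
by rewrite !mxE scalerDl scalerA.
Qed.

Lemma phiE_mul n (e : 'I_n -> 'I_n -> A) : MUsys e ->
  forall M N, phiE e (M *m N) = phiE e M * phiE e N.
Proof.
move=> [eM _] M N; rewrite /phiE mulr_suml; apply: eq_bigr => i _.
rewrite mulr_suml.
have H : forall j, (M i j *: e i j) * (\sum_k \sum_l N k l *: e k l)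
          = \sum_l (M i j * N j l) *: e i l.
  move=> j; rewrite mulr_sumr (bigD1 j) //=.
  rewrite [X in _ + X]big1 ?addr0.
    rewrite mulr_sumr; apply: eq_bigr => l _.
    by rewrite -scalerAl -scalerAr eM eqxx scalerA.
  move=> k /negPf njk; rewrite mulr_sumr big1 // => l _.
  by rewrite -scalerAl -scalerAr eM eq_sym njk !scaler0.
rewrite (eq_bigr _ (fun j _ => H j)) exchange_big /=.
apply: eq_bigr => l _; rewrite mxE scaler_suml; done.
Qed.

Lemma phiE_1 n (e : 'I_n -> 'I_n -> A) : MUsys e -> phiE e 1%:M = 1.
Proof.
move=> [_ e1]; rewrite /phiE -e1; apply: eq_bigr => i _.
rewrite (bigD1 i) //= big1 ?addr0; first by rewrite mxE eqxx scale1r.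
by move=> j /negPf nij; rewrite mxE eq_sym nij scale0r.
Qed.

Lemma phiE_inj n (e : 'I_n -> 'I_n -> A) : MUsys e -> injective (phiE e).
Proof.
move=> [eM e1] M N eq.
have D0 : phiE e (M - N) = 0.
  have -> : M - N = (-1) *: N + M by rewrite scaleN1r addrC.
  by rewrite phiE_lin scaleN1r eq addNr.
apply/matrixP => r s; apply/eqP; rewrite -subr_eq0; apply/eqP.
have key : forall a, e a r * phiE e (M - N) * e s a = (M - N) r s *: e a a.
  move=> a; rewrite /phiE mulr_sumr mulr_suml (bigD1 r) //=.
  rewrite [X in _ + X]big1 ?addr0.
    rewrite mulr_sumr mulr_suml (bigD1 s) //=.
    rewrite [X in _ + X]big1 ?addr0.
      by rewrite -scalerAr -scalerAl eM eqxx eM eqxx.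
    move=> j /negPf njs; rewrite -scalerAr -scalerAl eM eqxx eM njs.
    by rewrite scaler0.
  move=> i /negPf nir; rewrite mulr_sumr mulr_suml big1 // => j _.
  by rewrite -scalerAr eM eq_sym nir scaler0 mul0r.
have : (M - N) r s *: (1 : A) = 0.
  by rewrite -e1 scaler_sumr big1 // => a _; rewrite -key D0 mulr0 mul0r.
move/eqP; rewrite scaler_eq0 oner_eq0 orbF => /eqP.
by rewrite !mxE.
Qed.

Lemma phiE_emb n (e : 'I_n -> 'I_n -> A) : MUsys e -> matrix_embedding (phiE e).
Proof.
move=> H; split; [exact: phiE_inj | exact: phiE_lin | exact: phiE_mul | exact: phiE_1].
Qed.


Lemma phiE_delta n (e : 'I_n -> 'I_n -> A) r s : phiE e (delta_mx r s) = e r s.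
Proof.
rewrite /phiE (bigD1 r) //= [X in _ + X]big1 ?addr0.
  rewrite (bigD1 s) //= [X in _ + X]big1 ?addr0; first by rewrite mxE !eqxx scale1r.
  by move=> j /negPf njs; rewrite mxE eqxx njs scale0r.
move=> i /negPf nir; rewrite big1 // => j _; by rewrite mxE nir scale0r.
Qed.

Lemma phiE_span n (e : 'I_n -> 'I_n -> A) x : spanE e x -> exists M, phiE e M = x.
Proof.
move=> hx; apply: (hx (fun x => exists M, phiE e M = x)).
- split.
    by exists 0; rewrite /phiE big1 // => i _; rewrite big1 // => j _; rewrite mxE scale0r.
  by move=> a u v [M <-] [N <-]; exists (a *: M + N); rewrite phiE_lin.
- by move=> i j; exists (delta_mx i j); rewrite phiE_delta.
Qed.

Lemma MU_reindex (I : finType) (e : I -> I -> A) n : #|I| = n -> MUsys e ->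
  exists e' : 'I_n -> 'I_n -> A, MUsys e' /\ forall x, spanE e x -> spanE e' x.
Proof.
move=> h; subst n => [[eM e1]].
exists (fun r s => e (enum_val r) (enum_val s)); split; first split.
- move=> i j k l; rewrite eM (inj_eq enum_val_inj); done.
- rewrite -e1 (reindex (@enum_val I predT)) //=; apply: onW_bij; exact: enum_val_bij.
- move=> x hx P hP he; apply: hx => // i j.
  by have := he (enum_rank i) (enum_rank j); rewrite !enum_rankK.
Qed.

End Alg.

Section Geo.
Variables (F : closedFieldType) (V : lmodType F) (f : V -> F).
Hypothesis hq : is_quadratic_form f.
Hypothesis hnd : nondegenerate_qf f.
Hypothesis hinf : infinite_dim V.
Hypothesis two_nz : (2%:R : F) != 0.

Local Notation B := (polar f).

Lemma fZ a u : f (a *: u) = a ^+ 2 * f u. Proof. by case: hq. Qed.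
Lemma f0 : f 0 = 0. Proof. by rewrite -(scale0r 0) fZ expr2 !mul0r. Qed.
Lemma fN u : f (- u) = f u. Proof. by rewrite -scaleN1r fZ sqrrN expr1n mul1r. Qed.
Lemma BlinL a u1 u2 v : B (a *: u1 + u2) v = a * B u1 v + B u2 v.
Proof. by case: hq => _ []. Qed.
Lemma Bsym u v : B u v = B v u.
Proof. by rewrite /polar [u + v]addrC; ring. Qed.
Lemma B0l v : B 0 v = 0. Proof. by rewrite /polar add0r f0; ring. Qed.
Lemma B0r v : B v 0 = 0. Proof. by rewrite Bsym B0l. Qed.
Lemma BDl u w v : B (u + w) v = B u v + B w v.
Proof. by rewrite -[u]scale1r BlinL mul1r scale1r. Qed.
Lemma BZl a u v : B (a *: u) v = a * B u v.
Proof. by rewrite -[a *: u]addr0 BlinL B0l addr0. Qed.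
Lemma BNl u v : B (- u) v = - B u v.
Proof. by rewrite -scaleN1r BZl mulN1r. Qed.
Lemma BBl u w v : B (u - w) v = B u v - B w v.
Proof. by rewrite BDl BNl. Qed.
Lemma BDr u w v : B v (u + w) = B v u + B v w.
Proof. by rewrite Bsym BDl !(Bsym v). Qed.
Lemma BZr a u v : B v (a *: u) = a * B v u.
Proof. by rewrite Bsym BZl Bsym. Qed.
Lemma BNr u v : B v (- u) = - B v u.
Proof. by rewrite Bsym BNl Bsym. Qed.
Lemma BBr u w v : B v (u - w) = B v u - B v w.
Proof. by rewrite BDr BNr. Qed.
Lemma Buu u : B u u = f u + f u.
Proof.
rewrite /polar -[u + u]/(u *+ 2) -scaler_nat fZ.
have -> : (2%:R : F) ^+ 2 = 4%:R by rewrite expr2 -natrM.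
rewrite -[4%N]/(2 + 2)%N natrD; ring.
Qed.
Lemma fD u v : f (u + v) = f u + f v + B u v.
Proof. by rewrite /polar; ring. Qed.
Lemma fB u v : f (u - v) = f u + f v - B u v.
Proof. by rewrite fD fN BNr; ring. Qed.

Definition Bsimp := (BDl, BDr, BZl, BZr, BNl, BNr, BBl, BBr, B0l, B0r, fD, fB, fZ, fN, f0).

Definition orthQ (x : V) (Q : seq (V * V)) :=
  forall p, p \in Q -> B x p.1 = 0 /\ B x p.2 = 0.

Fixpoint hyp (Q : seq (V * V)) : Prop :=
  match Q with
  | [::] => True
  | (u, w) :: Q' => [/\ f u = 0, f w = 0, B u w = 1, orthQ u Q' /\ orthQ w Q' & hyp Q']
  end.

Fixpoint inspan (Q : seq (V * V)) (x : V) : Prop :=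
  match Q with
  | [::] => x = 0
  | (u, w) :: Q' => exists a b, inspan Q' (x - a *: u - b *: w)
  end.

Lemma orthQ_cons x p Q : orthQ x (p :: Q) <-> (B x p.1 = 0 /\ B x p.2 = 0) /\ orthQ x Q.
Proof.
split.
  by move=> h; split; [apply: h; apply: mem_head | move=> q hq0; apply: h; rewrite in_cons hq0 orbT].
move=> [h1 h2] q; rewrite in_cons => /orP [/eqP -> // | hq0]; exact: h2.
Qed.

Lemma orthQ_lin a x y Q : orthQ x Q -> orthQ y Q -> orthQ (a *: x + y) Q.
Proof.
move=> hx hy p hp; have [h1 h2] := hx p hp; have [h3 h4] := hy p hp.
by rewrite !BDl !BZl h1 h2 h3 h4 mulr0 addr0.
Qed.
Lemma orthQ0 Q : orthQ 0 Q.
Proof. by move=> p _; rewrite !B0l. Qed.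
Lemma orthQZ a x Q : orthQ x Q -> orthQ (a *: x) Q.
Proof. by move=> hx; rewrite -[a *: x]addr0; apply: orthQ_lin => //; apply: orthQ0. Qed.
Lemma orthQD x y Q : orthQ x Q -> orthQ y Q -> orthQ (x + y) Q.
Proof. by move=> hx hy; rewrite -[x]scale1r; apply: orthQ_lin. Qed.
Lemma orthQB x y Q : orthQ x Q -> orthQ y Q -> orthQ (x - y) Q.
Proof. by move=> hx hy; rewrite -scaleN1r addrC; apply: orthQ_lin. Qed.

Lemma span_orth Q s y : inspan Q s -> orthQ y Q -> B s y = 0.
Proof.
elim: Q s => [|[u w] Q IH] s /=; first by move=> ->; rewrite B0l.
move=> [a [b hs]] /orthQ_cons [[/= h1 h2] hy].
have := IH _ hs hy; rewrite !BBl !BZl (Bsym u) (Bsym w) h1 h2 !mulr0 !subr0 //.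
Qed.

Lemma proj Q : hyp Q -> forall x, exists v, orthQ v Q /\ inspan Q (x - v).
Proof.
elim: Q => [|[u w] Q IH] /=.
  by move=> _ x; exists x; split; [move=> p | rewrite subrr].
move=> [fu fw Buw [ou ow] hQ] x.
pose x1 := x - B x w *: u - B x u *: w.
have [v [ov hv]] := IH hQ x1.
exists v; split.
  apply/orthQ_cons; split => //=.
  have e1 := span_orth hv ou; have e2 := span_orth hv ow.
  rewrite BBl in e1; rewrite BBl in e2.
  have -> : B v u = B x1 u by apply/eqP; rewrite eq_sym -subr_eq0 e1.
  have -> : B v w = B x1 w by apply/eqP; rewrite eq_sym -subr_eq0 e2.
  rewrite /x1 !BBl !BZl !Buu fu fw.
  by rewrite (Bsym w u) Buw; split; ring.
exists (B x w), (B x u).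
by rewrite /x1 (addrAC x (-v)) (addrAC (x - _ *: u) (-v)).
Qed.

Lemma B_sum_l n (a : 'I_n -> F) (x : 'I_n -> V) y :
  B (\sum_(k < n) a k *: x k) y = \sum_(k < n) a k * B (x k) y.
Proof.
elim: n a x => [|n IH] a x; first by rewrite !big_ord0 B0l.
by rewrite !big_ord_recr /= BDl BZl IH.
Qed.

Lemma exists_perp (Ws : seq V) : exists s, s != 0 /\ forall w, w \in Ws -> B s w = 0.
Proof.
have [S [hS hind]] := hinf (size Ws).+1.
pose Mx := \matrix_(i < size S, j < size Ws) B S`_i Ws`_j.
have rk : (0 < \rank (kermx Mx))%N.
  rewrite mxrank_ker subn_gt0; apply: (leq_ltn_trans (rank_leq_col Mx)); by rewrite hS.
have [i hi] : exists i, row i (kermx Mx) != 0.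
  case: (pickP (fun i => row i (kermx Mx) != 0)) => [i hi | h0]; first by exists i.
  exfalso; suff : kermx Mx = 0 by move=> h; rewrite h mxrank0 in rk.
  apply/row_matrixP => i; have := h0 i; move/negbFE/eqP => ->; by rewrite row0.
pose c := row i (kermx Mx).
have hc : c *m Mx = 0 by rewrite -row_mul mulmx_ker row0.
exists (\sum_(k < size S) c 0 k *: S`_k); split.
  apply/eqP => hs0; move/eqP: hi; apply.
  apply/rowP => k; rewrite [RHS]mxE; exact: (hind (fun k => c 0 k) hs0 k).
move=> w hw; rewrite -(nth_index 0 hw) B_sum_l.
have hj : (index w Ws < size Ws)%N by rewrite index_mem.
have E := congr1 (fun M : 'M[F]_(1, size Ws) => M 0 (Ordinal hj)) hc.
rewrite !mxE in E.
rewrite -[RHS]E.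
apply: eq_bigr => k _.
by rewrite /Mx !mxE.
Qed.

Lemma nondeg_perp Q s : hyp Q -> orthQ s Q -> s != 0 ->
  exists y, orthQ y Q /\ B s y = 1.
Proof.
move=> hQ os s0.
have [y0 hy0] : exists y0, B s y0 != 0.
  apply: NNPP => hn; move/eqP: s0; apply; apply: hnd => v.
  by apply/eqP; apply: negbNE; apply/negP => hv; apply: hn; exists v.
have [y1 [oy1 hy1]] := proj hQ y0.
have e1 := span_orth hy1 os; rewrite BBl Bsym (Bsym y1) in e1.
have e2 : B s y1 = B s y0 by apply/eqP; rewrite eq_sym -subr_eq0 e1.
exists ((B s y1)^-1 *: y1); split; first exact: orthQZ.
by rewrite BZr mulVf // e2.
Qed.

Lemma two_f v : f v != 0 -> f v + f v != 0.
Proof. by move=> h; rewrite -mulr2n -mulr_natl mulf_neq0. Qed.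

Lemma half_sum (x : F) (v t : V) : x + x = 1 -> x *: (v + t) + x *: (v - t) = v.
Proof.
move=> hx; rewrite -scalerDr addrACA subrr addr0 scalerDr -scalerDl hx scale1r //.
Qed.

Lemma pair_step Q v : hyp Q -> orthQ v Q -> v != 0 ->
  exists u w a b, hyp ((u, w) :: Q) /\ v = a *: u + b *: w.
Proof.
move=> hQ ov v0.
case: (eqVneq (f v) 0) => fv0.
  have [y [oy By]] := nondeg_perp hQ ov v0.
  exists v, (y - f y *: v), 1, 0; split; last by rewrite scale1r scale0r addr0.
  have Byv : B y v = 1 by rewrite Bsym.
  split => //.
  - by rewrite fB fZ BZr fv0 Byv; ring.
  - by rewrite BBr BZr Buu fv0 By; ring.
  - by split => //; apply: orthQB => //; apply: orthQZ.
pose Ws := v :: flatten [seq [:: p.1; p.2] | p <- Q].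
have [s [s0 hs]] := exists_perp Ws.
have os : orthQ s Q.
  move=> p hp; split; apply: hs; rewrite in_cons; apply/orP; right;
  apply/flattenP; exists [:: p.1; p.2]; rewrite ?(map_f _ hp) ?inE ?eqxx ?orbT //.
have Bsv : B s v = 0 by apply: hs; exact: mem_head.
have [t [ot Bvt ft]] : exists t, [/\ orthQ t Q, B v t = 0 & f t = - f v].
  case: (eqVneq (f s) 0) => fs0.
    have [y [oy Bsy]] := nondeg_perp hQ os s0.
    pose r := y - (B y v / (f v + f v)) *: v.
    have Brv : B r v = 0.
      rewrite /r BBl BZl Buu; field; exact: two_f.
    have Bsr : B s r = 1 by rewrite /r BBr BZr Bsy Bsv mulr0 subr0.
    exists ((- f v - f r) *: s + r); split.
    - apply: orthQ_lin => //; rewrite /r; apply: orthQB => //; exact: orthQZ.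
    - by rewrite BDr BZr (Bsym v s) Bsv (Bsym v r) Brv; ring.
    - by rewrite fD fZ fs0 BZl Bsr; ring.
  have [rho hrho] : exists rho, rho ^+ 2 = - f v / f s.
    have : size ('X^2 - (- f v / f s)%:P : {poly F}) != 1%N by rewrite size_XnsubC.
    move/closed_rootP => [rho]; rewrite rootE !hornerE => /eqP h.
    by exists rho; apply/eqP; rewrite -subr_eq0 h.
  exists (rho *: s); split.
  - exact: orthQZ.
  - by rewrite BZr Bsym Bsv mulr0.
  - by rewrite fZ hrho mulrVK // unitfE.
pose a := v + t; pose b := v - t.
have fa : f a = 0 by rewrite /a fD Bvt ft; ring.
have fb : f b = 0 by rewrite /b fB Bvt ft; ring.
pose D := B a b.
have hD : D = 4%:R * f v.
  rewrite /D /a /b BDl !BBr !Buu Bvt (Bsym t v) Bvt ft.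
  by rewrite -[4%N]/(1 + 1 + 1 + 1)%N !natrD; ring.
have D0 : D != 0.
  rewrite hD mulf_neq0 // -[4%N]/(2 * 2)%N natrM mulf_neq0 //.
exists a, (D^-1 *: b), (2%:R^-1), (D / 2%:R); split.
  split => //.
  - by rewrite fZ fb mulr0.
  - by rewrite BZr -/D mulVf.
  - by split; [apply: orthQD | apply: orthQZ; apply: orthQB].
rewrite scalerA mulrAC mulfV // mul1r.
rewrite /a /b half_sum //; field; exact: two_nz.
Qed.

Lemma inspan_app P Q x : inspan Q x -> inspan (P ++ Q) x.
Proof.
elim: P => [|[u w] P IH] //= hx; exists 0, 0; rewrite !scale0r !subr0; exact: IH.
Qed.

Lemma extend (L : seq V) : forall Q, hyp Q -> exists P, hyp (P ++ Q) /\ forall l, l \in L -> inspan (P ++ Q) l.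
Proof.
elim: L => [|l L IH] Q hQ; first by exists [::].
have [v [ov hv]] := proj hQ l.
case: (eqVneq v 0) => [v0 | v0].
  have [P [hP hL]] := IH Q hQ; exists P; split => // x; rewrite in_cons => /orP [/eqP -> | hx].
    by apply: inspan_app; move: hv; rewrite v0 subr0.
  exact: hL.
have [u [w [a [b [hQ' hv']]]]] := pair_step hQ ov v0.
have [P [hP hL]] := IH _ hQ'.
exists (rcons P (u, w)); rewrite cat_rcons; split => // x; rewrite in_cons => /orP [/eqP -> | hx].
  apply: inspan_app => /=; exists a, b.
  by rewrite -addrA -opprD -hv'.
exact: hL.
Qed.

Lemma grow Q : hyp Q -> exists p, hyp (p :: Q).
Proof.
move=> hQ.
have [s [s0 hs]] := exists_perp (flatten [seq [:: p.1; p.2] | p <- Q]).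
have os : orthQ s Q.
  move=> p hp; split; apply: hs;
  apply/flattenP; exists [:: p.1; p.2]; rewrite ?(map_f _ hp) ?inE ?eqxx ?orbT //.
have [u [w [a [b [hQ' _]]]]] := pair_step hQ os s0.
by exists (u, w).
Qed.

Lemma grow_n n : exists Q, hyp Q /\ (n <= size Q)%N.
Proof.
elim: n => [|n [Q [hQ hn]]]; first by exists [::].
have [p hp] := grow hQ; exists (p :: Q); split => //=.
Qed.

End Geo.

Section Rk.
Variable F : fieldType.

Lemma rank_orth N (X Y : 'M[F]_N) : X *m X = X -> Y *m Y = Y -> X *m Y = 0 -> Y *m X = 0 ->
  \rank (X + Y)%R = (\rank X + \rank Y)%N.
Proof.
move=> hXX hYY hXY hYX.
have cap0 : \rank (X :&: Y)%MS = 0%N.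
  have [D hD] := submxP (capmxSl X Y); have [E hE] := submxP (capmxSr X Y).
  have h1 : (X :&: Y)%MS *m X = (X :&: Y)%MS by rewrite {1}hD -mulmxA hXX -hD.
  have h2 : (X :&: Y)%MS *m X = 0 by rewrite hE -mulmxA hYX mulmx0.
  by rewrite -h1 h2 mxrank0.
have := mxrank_sum_cap X Y; rewrite cap0 addn0 => <-.
apply/eqP; rewrite eqn_leq; apply/andP; split; apply: mxrankS.
  exact: addmx_sub_adds (submx_refl X) (submx_refl Y).
rewrite addsmx_sub; apply/andP; split.
  have e : X *m (X + Y) = X by rewrite mulmxDr hXX hXY addr0.
  rewrite -{1}e; exact: submxMl.
have e : Y *m (X + Y) = Y by rewrite mulmxDr hYY hYX add0r.
rewrite -{1}e; exact: submxMl.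
Qed.

Lemma rank_sum_fam N (P : nat -> 'M[F]_N) : (forall i, P i *m P i = P i) ->
  (forall i j, i != j -> P i *m P j = 0) ->
  forall k, \rank (\sum_(i < k) P i)%R = (\sum_(i < k) \rank (P i))%N.
Proof.
move=> hI hO; elim=> [|k IH]; first by rewrite !big_ord0 mxrank0.
rewrite !big_ord_recr /= -IH; apply: rank_orth => //.
- rewrite mulmx_suml; apply: eq_bigr => i _; rewrite mulmx_sumr (bigD1 i) //= big1 ?addr0 ?hI //.
  by move=> j hj; apply: hO; rewrite eq_sym.
- rewrite mulmx_suml big1 // => i _; apply: hO; by rewrite neq_ltn ltn_ord.
- rewrite mulmx_sumr big1 // => i _; apply: hO; by rewrite neq_ltn ltn_ord orbT.
Qed.

Lemma lin0 (U W : lmodType F) (g : U -> W) : is_lin g -> g 0 = 0.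
Proof.
move=> hg; have := hg 1 0 0; rewrite !scale1r addr0 => h.
by apply: (addrI (g 0)); rewrite addr0 -h.
Qed.

Lemma lin_sum (U W : lmodType F) (g : U -> W) (I : Type) (r : seq I) (G : I -> U) :
  is_lin g -> g (\sum_(i <- r) G i) = \sum_(i <- r) g (G i).
Proof.
move=> hg; elim: r => [|i r IH]; first by rewrite !big_nil lin0.
by rewrite !big_cons -IH; have := hg 1 (G i) (\sum_(j <- r) G j); rewrite !scale1r.
Qed.

Lemma mat_div m N (theta : 'M[F]_m -> 'M[F]_N) : is_lin theta ->
  (forall M M', theta (M *m M') = theta M *m theta M') -> theta 1%:M = 1%:M ->
  (0 < m)%N -> (m %| N)%N.
Proof.
case: m theta => [|m] theta // hl hm h1 _.
pose P i := if (i < m.+1)%N then theta (delta_mx (inord i : 'I_m.+1) (inord i)) else 0.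
have hI : forall i, P i *m P i = P i.
  by move=> i; rewrite /P; case: ifP => _; rewrite ?mulmx0 // -hm mul_delta_mx.
have hO : forall i j, i != j -> P i *m P j = 0.
  move=> i j hij; rewrite /P; case: ifP => hi; case: ifP => hj; rewrite ?mulmx0 ?mul0mx //.
  rewrite -hm mul_delta_mx_cond.
  have -> : (inord i == inord j :> 'I_m.+1) = false.
    by apply/negbTE; apply: contra hij => /eqP/(congr1 val); rewrite /= !inordK // => ->.
  exact: lin0.
have hsum : \sum_(i < m.+1) P i = 1%:M.
  rewrite -h1 (eq_bigr (fun i : 'I_m.+1 => theta (delta_mx i i))); last first.
    by move=> i _; rewrite /P ltn_ord inord_val.
  rewrite -lin_sum //; congr theta; apply/matrixP => r s; rewrite summxE (bigD1 r) //= big1.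
    by rewrite !mxE eqxx /= addr0 eq_sym.
  by move=> k hk; rewrite mxE eq_sym (negbTE hk).
have hrk : forall i, (i < m.+1)%N -> \rank (P i) = \rank (P 0%N).
  have key : forall i j, (i < m.+1)%N -> (j < m.+1)%N -> (\rank (P i) <= \rank (P j))%N.
    move=> i j hi hj.
    have -> : P i = theta (delta_mx (inord i) (inord j)) *m P j *m theta (delta_mx (inord j) (inord i)).
      by rewrite /P hi hj -!hm !mul_delta_mx.
    exact: leq_trans (mxrankM_maxl _ _) (mxrankM_maxr _ _).
  by move=> i hi; apply/eqP; rewrite eqn_leq !key.
have := rank_sum_fam hI hO m.+1; rewrite hsum mxrank1.
rewrite (eq_bigr (fun _ => \rank (P 0%N))); last by move=> i _; apply: hrk.
by rewrite sum_nat_const card_ord => ->; apply: dvdn_mulr.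
Qed.

Lemma emb_div (A : algType F) m N (phi : 'M[F]_m -> A) (psi : 'M[F]_N -> A) :
  matrix_embedding phi -> matrix_embedding psi -> (forall M, exists P, psi P = phi M) ->
  (m %| N)%N.
Proof.
move=> [pinj plin pmul p1] [qinj qlin qmul q1] him.
have m0 : (0 < m)%N.
  case: m phi pinj plin pmul p1 him => // phi _ plin _ p1 _.
  exfalso; move: p1; rewrite (_ : 1%:M = 0); last by apply/matrixP => [[]].
  by rewrite lin0 // => /eqP; rewrite eq_sym oner_eq0.
have ex : forall M, exists P, psi P == phi M by move=> M; have [P hP] := him M; exists P; apply/eqP.
pose theta M := xchoose (ex M).
have ht : forall M, psi (theta M) = phi M by move=> M; apply/eqP; exact: xchooseP (ex M).
apply: (@mat_div m N theta) => //.
- by move=> a M M'; apply: qinj; rewrite qlin !ht plin.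
- by move=> M M'; apply: qinj; rewrite qmul !ht pmul.
- by apply: qinj; rewrite ht p1 q1.
Qed.

End Rk.

Section Sub.
Variables (F : fieldType) (A : algType F) (U : A -> Prop).
Hypothesis U1 : U 1.
Hypothesis Ulin : forall a x y, U x -> U y -> U (a *: x + y).
Hypothesis Umul : forall x y, U x -> U y -> U (x * y).

Definition Ub (a : A) : bool := if excluded_middle_informative (U a) then true else false.
Lemma UbP a : reflect (U a) (Ub a).
Proof. rewrite /Ub; case: excluded_middle_informative => h; by constructor. Qed.
Definition Upred : {pred A} := Ub.
Lemma Uclosed : subalg_closed Upred.
Proof.
split.
- by apply/UbP.
- by move=> a x y /UbP hx /UbP hy; apply/UbP; apply: Ulin.
- by move=> x y /UbP hx /UbP hy; apply/UbP; apply: Umul.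
Qed.
HB.instance Definition _ := GRing.isSubalgClosed.Build F A Upred Uclosed.
Record subU := SubU { uval : A; _ : uval \in Upred }.
HB.instance Definition _ := [isSub for uval].
HB.instance Definition _ := [Choice of subU by <:].
HB.instance Definition _ := [SubChoice_isSubAlgebra of subU by <:].

Lemma univ_all (V : lmodType F) (f : V -> F) (iota : V -> A) :
  is_clifford_algebra f iota -> (forall v, U (iota v)) -> forall x, U x.
Proof.
move=> [hrel huniv] hU x.
have memi : forall v, iota v \in Upred by move=> v; apply/UbP.
pose g v : subU := SubU (memi v).
have hg : clifford_relations f g.
  case: hrel => hlin hsq; split.
    by move=> a u v; apply: val_inj; rewrite /= hlin.
  by move=> v; apply: val_inj; rewrite /= hsq.
have [h [[hlin [hmul h1]] hhi _]] := huniv subU g hg.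
have [h0 [_ _ huniq]] := huniv A iota hrel.
have e1 : uval (h x) = h0 x.
  apply: (huniq (fun y => uval (h y))).
    split; first by move=> a y z; rewrite hlin.
    by split; [move=> y z; rewrite hmul | rewrite h1].
  by move=> v; rewrite hhi.
have e2 : x = h0 x.
  by apply: (huniq id) => //; split => //.
have := valP (h x); rewrite /= e1 -e2 => /UbP //.
Qed.
End Sub.

Section Cl.
Variables (F : closedFieldType) (V : lmodType F) (f : V -> F) (A : algType F) (iota : V -> A).
Hypothesis hq : is_quadratic_form f.
Hypothesis hrel : clifford_relations f iota.

Lemma iota_lin : is_lin iota. Proof. by case: hrel. Qed.
Lemma iota_sq v : iota v * iota v = (f v)%:A. Proof. by case: hrel. Qed.
Lemma iotaD x y : iota (x + y) = iota x + iota y.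
Proof. by have := iota_lin 1 x y; rewrite !scale1r. Qed.
Lemma iota0 : iota 0 = 0. Proof. exact: lin0 iota_lin. Qed.
Lemma iotaZ a x : iota (a *: x) = a *: iota x.
Proof. by have := iota_lin a x 0; rewrite !addr0 iota0 addr0. Qed.

Lemma cancel4 (M : zmodType) (a b c p q : M) : a + p + (q + b) = a + b + c -> p + q = c.
Proof. by move=> h; apply: (addrI (a + b)); rewrite -h addrACA (addrC b). Qed.

Lemma iota_anti u w : iota u * iota w + iota w * iota u = (polar f u w)%:A.
Proof.
have := iota_sq (u + w); rewrite iotaD mulrDl !mulrDr !iota_sq.
rewrite (fD f) !scalerDl; exact: cancel4.
Qed.

Lemma anti_of u w : polar f u w = 0 -> anti (iota u) (iota w).
Proof.
move=> h; rewrite /anti; apply/eqP; rewrite -addr_eq0 iota_anti h scale0r //.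
Qed.

Lemma hyp_clp Q : hyp f Q -> clp (map (fun p => (iota p.1, iota p.2)) Q).
Proof.
elim: Q => [|[u w] Q IH] //= [fu fw Buw [ou ow] hQ]; split.
- by rewrite iota_sq fu scale0r.
- by rewrite iota_sq fw scale0r.
- by rewrite iota_anti Buw scale1r.
- move=> p /mapP [q hq' ->] /=; have [h1 h2] := ou q hq'; have [h3 h4] := ow q hq'.
  by split; apply: anti_of.
- exact: IH.
Qed.

Lemma subrK' (W : zmodType) (x y : W) : x - y + y = x. Proof. exact: subrK. Qed.

Lemma vdecomp (W : lmodType F) (x u w : W) a b : x = b *: w + (a *: u + (x - a *: u - b *: w)).
Proof.
rewrite (addrC (a *: u)) (addrAC (x - a *: u)) (@subrK' _ x (a *: u)).
apply: esym; apply: (etrans (addrC _ _)); exact: subrK'.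
Qed.

Lemma iota_decomp x u w a b : iota x = b *: iota w + (a *: iota u + iota (x - a *: u - b *: w)).
Proof.
by rewrite {1}(vdecomp x u w a b) !iotaD !iotaZ.
Qed.

Lemma span_img (P : A -> Prop) Q x : subsp P ->
  (forall p, p \in Q -> P (iota p.1) /\ P (iota p.2)) -> inspan Q x -> P (iota x).
Proof.
move=> hP; elim: Q x => [|[u w] Q IH] x hQ /=; first by move=> ->; rewrite iota0; case: hP.
move=> [a [b hx]].
have [hu hw] := hQ (u, w) (mem_head _ _).
have hQ' : forall p, p \in Q -> P (iota p.1) /\ P (iota p.2).
  by move=> p hp; apply: hQ; rewrite in_cons hp orbT.
rewrite (iota_decomp x u w a b).
case: hP => _ H; apply: (H) => //; apply: (H) => //; exact: IH.
Qed.

Lemma emb_Q Q : hyp f Q -> exists phi : 'M[F]_(2 ^ size Q) -> A,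
  matrix_embedding phi /\ forall x, inspan Q x -> exists M, phi M = iota x.
Proof.
move=> hQ; have hc := hyp_clp hQ.
have [I [e [hMU card _ hspan]]] := clp_MU_n (erefl _) hc.
rewrite size_map in card.
have [e' [hMU' hsp']] := MU_reindex card hMU.
exists (phiE e'); split; first exact: phiE_emb.
move=> x hx.
apply: (span_img (P := fun a => exists M, phiE e' M = a)) hx.
- split; first by exists 0; exact: lin0 (phiE_lin e').
  by move=> a u v [M <-] [N <-]; exists (a *: M + N); rewrite phiE_lin.
- move=> p hp; have [s1 s2] := hspan _ (map_f (fun p => (iota p.1, iota p.2)) hp).
  by split; apply: phiE_span; apply: hsp'.
Qed.

End Cl.

Section Fin.
Variables (F : closedFieldType) (V : lmodType F) (f : V -> F) (A : algType F) (iota : V -> A).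

Inductive gen (L : seq V) : A -> Prop :=
| gen1 : gen L 1
| geni v : v \in L -> gen L (iota v)
| genlin a x y : gen L x -> gen L y -> gen L (a *: x + y)
| genmul x y : gen L x -> gen L y -> gen L (x * y).

Lemma gen_mono L L' x : {subset L <= L'} -> gen L x -> gen L' x.
Proof.
move=> hs; elim => [|v hv|a y z _ hy _ hz|y z _ hy _ hz].
- exact: gen1.
- by apply: geni; apply: hs.
- exact: genlin.
- exact: genmul.
Qed.

Hypothesis hq : is_quadratic_form f.
Hypothesis hnd : nondegenerate_qf f.
Hypothesis hinf : infinite_dim V.
Hypothesis two_nz : (2%:R : F) != 0.
Hypothesis hcl : is_clifford_algebra f iota.

Lemma gen_emb L : exists k (phi : 'M[F]_(2 ^ k) -> A),
  matrix_embedding phi /\ forall x, gen L x -> exists M, phi M = x.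
Proof.
have [P [hP hL]] := extend hq hnd hinf two_nz L (Q := [::]) I.
rewrite cats0 in hP hL.
have [phi [emb hsp]] := emb_Q hcl.1 hP.
exists (size P), phi; split => // x; case: (emb) => _ hlin hmul h1.
elim => [|v hv|a y z _ [M <-] _ [N <-]|y z _ [M <-] _ [N <-]].
- by exists 1%:M.
- exact: hsp (hL v hv).
- by exists (a *: M + N); rewrite hlin.
- by exists (M *m N); rewrite hmul.
Qed.

Lemma all_gen x : exists L, gen L x.
Proof.
refine (univ_all (U := fun x => exists L, gen L x) _ _ _ hcl _ x).
- by exists [::]; exact: gen1.
- move=> a y z [L1 h1] [L2 h2]; exists (L1 ++ L2); apply: genlin.
    by apply: gen_mono h1 => v hv; rewrite mem_cat hv.
  by apply: gen_mono h2 => v hv; rewrite mem_cat hv orbT.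
- move=> y z [L1 h1] [L2 h2]; exists (L1 ++ L2); apply: genmul.
    by apply: gen_mono h1 => v hv; rewrite mem_cat hv.
  by apply: gen_mono h2 => v hv; rewrite mem_cat hv orbT.
- by move=> v; exists [:: v]; apply: geni; rewrite mem_head.
Qed.

Lemma LM (s : seq A) : exists k (phi : 'M[F]_(2 ^ k) -> A),
  matrix_embedding phi /\ forall x, x \in s -> exists M, phi M = x.
Proof.
have [L hL] : exists L, forall x, x \in s -> gen L x.
  elim: s => [|a s [L hL]]; first by exists [::].
  have [La ha] := all_gen a; exists (La ++ L) => x; rewrite in_cons => /orP [/eqP -> | hx].
    by apply: gen_mono ha => v hv; rewrite mem_cat hv.
  by apply: gen_mono (hL x hx) => v hv; rewrite mem_cat hv orbT.
have [k [phi [emb him]]] := gen_emb L.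
by exists k, phi; split => // x hx; apply: him; apply: hL.
Qed.

Lemma D_div d : Dset A d -> exists k, (d %| 2 ^ k)%N.
Proof.
move=> [phi emb].
pose s := [seq phi (delta_mx ij.1 ij.2) | ij <- enum (predT : pred ('I_d * 'I_d))].
have [k [psi [emb' him]]] := LM s.
exists k; apply: (emb_div emb emb') => M.
case: (emb) => _ hlin _ _; case: (emb') => _ qlin _ _.
rewrite (matrix_sum_delta M) (lin_sum (g := phi)) //.
apply: (@subsp_sum _ _ (fun a => exists P, psi P = a)).
- split; first by exists 0; exact: lin0 qlin.
  by move=> a u v [P <-] [P' <-]; exists (a *: P + P'); rewrite qlin.
- move=> i; rewrite (lin_sum (g := phi)) //.
  apply: (@subsp_sum _ _ (fun a => exists P, psi P = a)).
  + split; first by exists 0; exact: lin0 qlin.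
    by move=> a u v [P <-] [P' <-]; exists (a *: P + P'); rewrite qlin.
  + move=> j; have := hlin (M i j) (delta_mx i j) 0; rewrite addr0 (lin0 hlin) addr0 => ->.
    have hij : (i, j) \in enum (predT : pred ('I_d * 'I_d)) by rewrite mem_enum.
    have [P hP] := him (phi (delta_mx i j)) (map_f (fun ij : 'I_d * 'I_d => phi (delta_mx ij.1 ij.2)) hij).
    by exists (M i j *: P); rewrite -[_ *: P]addr0 qlin (lin0 qlin) addr0 hP.
Qed.

End Fin.

Theorem theorem5 (F : closedFieldType) (V : lmodType F) (f : V -> F)
  (A : algType F) (iota : V -> A) :
  ~~ (2%N \in [pchar F]) ->
  infinite_dim V ->
  is_quadratic_form f -> nondegenerate_qf f ->
  is_clifford_algebra f iota ->
  locally_matrix A /\ is_steinitz_lcm (Dset A) two_inf.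
Proof.
move=> hchar hinf hq hnd hcl.
have two_nz : (2%:R : F) != 0.
  by apply: contra hchar => h; rewrite inE /= h.
split.
  move=> s; have [k [phi [emb him]]] := LM hq hnd hinf two_nz hcl s.
  by exists (2 ^ k)%N, phi.
split.
  move=> d hd p pp; rewrite /two_inf /steinitz_of_nat.
  case: eqP => [// | hp] /=.
  have [k hk] := D_div hq hnd hinf two_nz hcl hd.
  have := dvdn_leq_log p (expn_gt0 2 k) hk.
  have hp' : (p == 2%N) = false by apply/eqP.
  by rewrite lognX (logn_prime _ (isT : prime 2)) hp' muln0.
move=> t ht p pp; rewrite /two_inf.
case: eqP => [-> | hp]; last by case: (t p).
case E: (t 2%N) => [y|] //=.
have [Q [hQ hsz]] := grow_n hq hnd hinf two_nz y.+1.
have [phi [emb _]] := emb_Q hcl.1 hQ.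
have := ht _ (ex_intro _ phi emb) 2%N (erefl _); rewrite /steinitz_of_nat E /=.
rewrite pfactorK // => h; move: (leq_trans hsz h); by rewrite ltnn.
Qed.
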